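(* Let $p\ne q$ be primes, $G=\mathbb{Z}_p^2\times\mathbb{Z}_q^2$, and $S\subseteq G$ with $\gcd(|S|,p^2q^2)=pq$ and $|S|\ge pq\min\{p,q\}$. Then $S$ is not spectral.
   Context: For $w=(u,v)\in G$ ($u\in\mathbb{Z}_p^2$, $v\in\mathbb{Z}_q^2$) define $\chi_w(a,b)=\exp\big(2\pi i(\tfrac{u\cdot a}{p}+\tfrac{v\cdot b}{q})\big)$ and $\chi(S)=\sum_{s\in S}\chi(s)$. $S$ is spectral if there is $\Lambda\subseteq G$ with $|\Lambda|=|S|$ and $\chi_{\lambda-\lambda'}(S)=0$ for all distinct $\lambda,\lambda'\in\Lambda$. *)

(* Defs.v *)
From HB Require Import structures.
From mathcomp Require Import all_boot all_order all_algebra all_field.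
Set Implicit Arguments. Unset Strict Implicit. Unset Printing Implicit Defensive.
Import Order.TTheory GRing.Theory Num.Theory.
Local Open Scope ring_scope.

(* zeta n = exp(2 pi i / n): n.-root (-1) is the n-th root of -1 of minimal
   nonnegative argument, i.e. exp(i pi / n) (for n > 1); its square is
   exp(2 pi i / n). *)
Definition zeta (n : nat) : algC := (n.-root (-1)) ^+ 2.

Notation G p q := (('Z_p * 'Z_p) * ('Z_q * 'Z_q))%type.

Definition chi (p q : nat) (w x : G p q) : algC :=
  zeta p ^+ (w.1.1 * x.1.1 + w.1.2 * x.1.2)%N *
  zeta q ^+ (w.2.1 * x.2.1 + w.2.2 * x.2.2)%N.

Definition chiS (p q : nat) (w : G p q) (S : {set G p q}) : algC :=
  \sum_(s in S) chi w s.

Definition spectral (p q : nat) (S : {set G p q}) : Prop :=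
  exists Lam : {set G p q},
    #|Lam| = #|S| /\
    (forall l l', l \in Lam -> l' \in Lam -> l != l' -> chiS (l - l') S = 0).

(* Main.v *)
Require Import Defs.
From HB Require Import structures.
From mathcomp Require Import all_boot all_order all_algebra all_field ring.
Set Implicit Arguments. Unset Strict Implicit. Unset Printing Implicit Defensive.
Import Order.TTheory GRing.Theory Num.Theory.
Local Open Scope ring_scope.
Lemma zeta_prim r : prime r -> r.-primitive_root (zeta r).
Proof.
move=> pr; have r_gt1 := prime_gt1 pr; have r0 : (0 < r)%N by apply: ltnW.
rewrite /zeta; set w := _.-root _.
have wr : w ^+ r = -1 by rewrite /w rootCK.
have z1 : zeta r ^+ r = 1 by rewrite -exprM mulnC exprM wr sqrrN expr1n.
have [m pm mr] := prim_order_exists r0 z1.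
case/primeP: pr => _ /(_ m mr) /orP[/eqP m1|/eqP <- //].
exfalso; move: (prim_expr_order pm); rewrite m1 expr1 /zeta -/w => /eqP.
rewrite sqrf_eq1 => /orP[/eqP w1 | /eqP wm1].
  move: wr; rewrite w1 expr1n => /eqP; rewrite -subr_eq0 opprK.
  by rewrite (_ : 1 + 1 = 2%:R) // pnatr_eq0.
by move: (rootC_lt0 (-1 : algC) r_gt1); rewrite -/w wm1 ltrN10.
Qed.

Lemma zeta_exp r m : prime r -> zeta r ^+ (m %% r) = zeta r ^+ m.
Proof. by move=> pr; apply: expr_mod; apply: prim_expr_order (zeta_prim pr). Qed.

Lemma galois_conj r (I : finType) (A : {pred I}) (e : I -> nat) d :
  prime r -> ~~ (r %| d)%N ->
  \sum_(i in A) zeta r ^+ (d * e i) = 0 -> \sum_(i in A) zeta r ^+ (e i) = 0.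
Proof.
move=> pr nd H.
pose Q : {poly rat} := \sum_(i in A) 'X^(e i).
have evQ z : (map_poly ratr Q).[z] = \sum_(i in A) z ^+ (e i) :> algC.
  rewrite raddf_sum horner_sum; apply: eq_bigr => i _.
  by rewrite /= map_polyXn hornerXn.
have pz := zeta_prim pr.
have pzd : r.-primitive_root (zeta r ^+ d).
  by rewrite prim_root_exp_coprime // coprime_sym prime_coprime.
have Em : minCpoly (zeta r) = minCpoly (zeta r ^+ d).
  by rewrite (minCpoly_cyclotomic pz) (minCpoly_cyclotomic pzd) -(Cintr_Cyclotomic pz) -(Cintr_Cyclotomic pzd).
have [q1 [D1 _] R1] := minCpolyP (zeta r).
have [q2 [D2 _] R2] := minCpolyP (zeta r ^+ d).
have e12 : q1 = q2 by move: Em; rewrite D1 D2 => /map_poly_inj.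
apply/eqP; move: (R1 Q); rewrite /root evQ => ->.
rewrite e12 -R2 /root evQ; apply/eqP; rewrite -[RHS]H; apply: eq_bigr => i _.
by rewrite exprM.
Qed.

Lemma sum_Zp r (F : nat -> algC) : prime r ->
  \sum_(a : 'Z_r) F a = \sum_(i < r) F i.
Proof.
move=> pr; rewrite -(big_mkord xpredT F) -(big_mkord xpredT F).
by rewrite Zp_cast // prime_gt1.
Qed.

Lemma ltZp r (x : 'Z_r) : prime r -> (x < r)%N.
Proof. by case: x => m /= lm pr; rewrite -(Zp_cast (prime_gt1 pr)). Qed.

Lemma geom r g : prime r -> (g < r)%N ->
  \sum_(a : 'Z_r) zeta r ^+ (a * g) = if g == 0%N then r%:R else 0.
Proof.
move=> pr gr; rewrite (sum_Zp (fun a => zeta r ^+ (a * g))) //.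
have pz := zeta_prim pr.
case: eqP => [-> | /eqP g0].
  by rewrite (eq_bigr (fun _ => 1)) => [|i _]; rewrite ?muln0 ?expr0 // sumr_const card_ord.
set w := zeta r ^+ g.
have w1 : w != 1.
  by rewrite /w -(prim_order_dvd pz) gtnNdvd // lt0n.
have wr : w ^+ r = 1 by rewrite /w -exprM mulnC exprM (prim_expr_order pz) expr1n.
have : w ^+ r - 1 = 0 by rewrite wr subrr.
rewrite subrX1 => /eqP; rewrite mulf_eq0 subr_eq0 (negbTE w1) /= => /eqP S0; rewrite -[RHS]S0.
by apply: eq_bigr => i _; rewrite /w -[in RHS]exprM mulnC.
Qed.

Lemma fourier r (I : finType) (A : {pred I}) (f : I -> 'Z_r * 'Z_r) :
  prime r ->
  (forall v : 'Z_r * 'Z_r, v != 0 ->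
     \sum_(i in A) zeta r ^+ (v.1 * (f i).1 + v.2 * (f i).2)%N = 0) ->
  (r ^ 2 %| #|A|)%N.
Proof.
move=> pr H.
have E : \sum_(v : 'Z_r * 'Z_r) \sum_(i in A) zeta r ^+ (v.1 * (f i).1 + v.2 * (f i).2)%N
   = #|A|%:R.
  rewrite (bigD1 (0 : 'Z_r * 'Z_r)) //= [X in _ + X]big1 => [|v vn0]; last exact: H.
  by rewrite addr0 (eq_bigr (fun _ => 1)) => [|i _]; rewrite ?sumr_const ?expr0.
have Ei i : \sum_(v : 'Z_r * 'Z_r) zeta r ^+ (v.1 * (f i).1 + v.2 * (f i).2)%N
   = ((r ^ 2 * (f i == 0%R))%N)%:R.
  rewrite -(pair_bigA _ (fun x y : 'Z_r => zeta r ^+ (x * (f i).1 + y * (f i).2)%N)) /=.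
  under eq_bigr do under eq_bigr do rewrite exprD.
  rewrite -big_distrlr /= !geom //; last first.
  - exact: ltZp.
  - exact: ltZp.
  case: (f i) => x y /=.
  have zE (u : 'Z_r) : ((u : nat) == 0%N) = (u == 0) by [].
  rewrite xpair_eqE !zE.
  case: (x == 0); case: (y == 0); rewrite /= ?mulr0 ?mul0r ?muln0 //.
  by rewrite muln1 natrX expr2.
rewrite exchange_big /= (eq_bigr _ (fun i _ => Ei i)) -natr_sum in E.
move/eqP: E; rewrite eqr_nat => /eqP <-.
by apply: dvdn_sum => i _; apply: dvdn_mulr.
Qed.

Lemma unitZ r (x : 'Z_r) : prime r -> x != 0 -> x \is a GRing.unit.
Proof.
move=> pr x0; rewrite -(natr_Zp x) unitZpE ?prime_gt1 // prime_coprime //.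
rewrite gtnNdvd ?ltZp // lt0n; exact: x0.
Qed.

Lemma line r (v z : 'Z_r * 'Z_r) : prime r -> v != 0 ->
  v.1 * z.2 - v.2 * z.1 = 0 -> exists d : 'Z_r, z.1 = d * v.1 /\ z.2 = d * v.2.
Proof.
case: v z => [v1 v2] [z1 z2] pr /= v0 /eqP; rewrite subr_eq0 => /eqP E.
case: (eqVneq v1 0) => [v10 | v10].
  subst v1; have v20 : v2 != 0 by move: v0; rewrite xpair_eqE eqxx.
  have u2 := unitZ pr v20.
  have z10 : z1 = 0.
    by rewrite -(mulKr u2 z1) -E mul0r mulr0.
  by exists (z2 / v2); rewrite mulr0 divrK.
have u1 := unitZ pr v10.
exists (z1 / v1); split; first by rewrite divrK.
by rewrite -(mulKr u1 z2) E mulrA mulrC mulrA.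
Qed.

Lemma valZpM r (a b : 'Z_r) : prime r -> ((a * b)%R : nat) = (a * b %% r)%N.
Proof. by move=> pr; rewrite -[X in (_ %% X)%N](Zp_cast (prime_gt1 pr)). Qed.

Lemma key r (K T : finType) (S : {set T}) (g : T -> 'Z_r * 'Z_r)
    (Lam : {set K * ('Z_r * 'Z_r)}) : prime r ->
  (forall l l', l \in Lam -> l' \in Lam -> l.1 = l'.1 -> l != l' ->
     \sum_(s in S) zeta r ^+ ((l.2 - l'.2)%R.1 * (g s).1 + (l.2 - l'.2)%R.2 * (g s).2)%N = 0) ->
  ~~ (r ^ 2 %| #|S|)%N -> (#|Lam| <= #|K| * r)%N.
Proof.
move=> pr H ndv; rewrite leqNgt; apply/negP => big.
have [k Hk] : exists k, (r < #|[set l in Lam | l.1 == k]|)%N.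
  case: (boolP [exists k, (r < #|[set l in Lam | l.1 == k]|)%N]) => [/existsP //|].
  move/existsPn => Hn; exfalso; move: big; rewrite ltnNge => /negP; apply.
  have -> : #|Lam| = \sum_k #|[set l in Lam | l.1 == k]|.
    rewrite -sum1_card (partition_big fst xpredT) //=.
    by apply: eq_bigr => j _; rewrite -sum1_card; apply: eq_bigl => l; rewrite inE.
  rewrite -sum_nat_const; apply: leq_sum => j _; rewrite leqNgt; exact: Hn.
set Fb := [set l in Lam | l.1 == k] in Hk.
set F := [set l.2 | l in Fb].
have cF : #|F| = #|Fb|.
  apply: card_in_imset => [[a x] [b y]]; rewrite !inE /= => /andP[_ /eqP ->] /andP[_ /eqP ->].
  by move=> ->.
apply/negP: ndv; apply/negPn; apply: (@fourier r T [pred x in S] g pr) => v v0.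
pose h (x : 'Z_r * 'Z_r) := v.1 * x.2 - v.2 * x.1.
have : ~~ dinjectiveb h F.
  apply/negP => /dinjectiveP inj.
  have := max_card (h @: F); rewrite card_in_imset // (_ : #|'Z_r| = r); last by rewrite card_ord; exact: Zp_cast (prime_gt1 pr).
  by rewrite cF leqNgt Hk.
case/dinjectivePn => x xF [y]; rewrite inE => /andP[yx yF] hxy.
case/imsetP: xF => lx; rewrite inE => /andP[lxL /eqP lx1] ex; subst x.
case/imsetP: yF => ly; rewrite inE => /andP[lyL /eqP ly1] eyy; subst y.
set z := lx.2 - ly.2.
have hz : v.1 * z.2 - v.2 * z.1 = 0.
  move: hxy; rewrite /h /z /= => E.
  transitivity ((v.1*lx.2.2 - v.2*lx.2.1) - (v.1*ly.2.2 - v.2*ly.2.1)); first by ring.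
  by rewrite E subrr.
have [d [zd1 zd2]] := line pr v0 hz.
have d0 : d != 0.
  apply: contra yx => /eqP d0.
  have : z = 0 by rewrite [z]surjective_pairing zd1 zd2 d0 !mul0r.
  by rewrite /z => /eqP; rewrite subr_eq0 eq_sym.
have Hl := H lx ly lxL lyL (etrans lx1 (esym ly1)).
have lxy : lx != ly by apply: contra yx => /eqP ->.
move: (Hl lxy); rewrite -/z zd1 zd2 => Hs.
refine (@galois_conj r T [pred x in S] (fun s => (v.1 * (g s).1 + v.2 * (g s).2)%N) d pr _ _).
  by rewrite gtnNdvd ?ltZp // lt0n; exact: d0.
rewrite -[RHS]Hs; apply: eq_bigr => s _.
rewrite -(zeta_exp _ pr) -[RHS](zeta_exp _ pr); congr (_ ^+ _).
rewrite !valZpM //.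
by rewrite -modnDm !modnMml modnDm mulnDr !mulnA.
Qed.

Lemma cardZ r : prime r -> #|'Z_r| = r.
Proof. by move=> pr; rewrite card_ord; exact: Zp_cast (prime_gt1 pr). Qed.

Lemma ndvd_sq (p q n : nat) : prime p -> prime q -> p != q ->
  gcdn n (p ^ 2 * q ^ 2) = (p * q)%N -> ~~ (q ^ 2 %| n)%N.
Proof.
move=> pp pq pnq hg; apply/negP => qn.
have : (q ^ 2 %| p * q)%N by rewrite -hg dvdn_gcd qn dvdn_mull.
rewrite (_ : (q ^ 2 = q * q)%N) ?dvdn_pmul2r ?prime_gt0 ?dvdn_prime2 //; last first.
by rewrite eq_sym (negbTE pnq).
Qed.

Local Close Scope ring_scope.
Theorem lemma4p4 (p q : nat) (S : {set G p q}) :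
  prime p -> prime q -> p != q ->
  gcdn #|S| (p ^ 2 * q ^ 2) = p * q ->
  p * q * minn p q <= #|S| ->
  ~ spectral S.
Proof.
move=> pp pq pnq hg hmin [Lam [cL orth]].
have b1 : (#|Lam| <= p * p * q)%N.
  rewrite (_ : p * p * q = #|{: 'Z_p * 'Z_p}| * q); last by rewrite card_prod !cardZ.
  apply: (@key q _ _ S (fun s => s.2) Lam pq); last first.
    exact: ndvd_sq pp pq pnq hg.
  move=> l l' lL l'L e1 nl; move: (orth l l' lL l'L nl); rewrite /chiS /chi.
  move=> E; rewrite -[RHS]E; apply: eq_bigr => s _.
  have -> : (l - l')%R.1 = 0%R by rewrite /= e1 subrr.
  by rewrite /= mul0n expr0 mul1r.
pose sw (l : G p q) := (l.2, l.1).
have b2 : (#|Lam| <= q * q * p)%N.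
  have -> : #|Lam| = #|sw @: Lam|.
    by rewrite card_imset // => [[a b] [c d]] [-> ->].
  rewrite (_ : q * q * p = #|{: 'Z_q * 'Z_q}| * p); last by rewrite card_prod !cardZ.
  apply: (@key p _ _ S (fun s => s.1) _ pp); last first.
    apply: (ndvd_sq pq pp); first by rewrite eq_sym.
    by rewrite [(q ^ 2 * _)]mulnC hg mulnC.
  move=> m m' /imsetP[l lL ->] /imsetP[l' l'L ->] /= e1 nl.
  have nl' : l != l' by apply: contra nl => /eqP ->.
  move: (orth l l' lL l'L nl'); rewrite /chiS /chi.
  move=> E; rewrite -[RHS]E; apply: eq_bigr => s _.
  have -> : (l - l')%R.2 = 0%R by rewrite /= e1 subrr.
  by rewrite /= mul0n expr0 mulr1.
rewrite -cL in hmin hg.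
have fin (a b : nat) : prime a -> prime b -> #|Lam| = a * a * b ->
    gcdn #|Lam| (a ^ 2 * b ^ 2) = a * b -> False.
  move=> pa pb e; have dv : a * a * b %| a ^ 2 * b ^ 2.
    by rewrite -!mulnn mulnA dvdn_mulr.
  rewrite e (gcdn_idPl dv) => /eqP; rewrite mulnAC -{2}[a * b]muln1.
  rewrite eqn_pmul2l ?muln_gt0 ?prime_gt0 // => /eqP a1.
  by move: pa; rewrite a1.
case: (leqP p q) => hpq.
  move: hmin; rewrite (minn_idPl hpq) => h1.
  apply: (fin p q pp pq _ hg); apply/eqP; rewrite eqn_leq b1 /=.
  by rewrite mulnAC.
move: hmin; rewrite (minn_idPr (ltnW hpq)) => h1.
apply: (fin q p pq pp _); last by rewrite mulnC hg mulnC.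
apply/eqP; rewrite eqn_leq b2 /=.
by rewrite mulnC mulnA.
Qed.
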